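(* Let $H$ be a finite simple graph on vertex set $\{x_1,\dots,x_n\}$, let $\Bbbk$ be a field and $S=\Bbbk[x_1,\dots,x_n]$. Suppose $H$ has a perfect matching $M$ of cardinality $k+1$ which is $k$-admissable. Let $u_M=\prod_{e\in M}\prod_{x_i\in e}x_i$. Then the simplicial complex $K^{u_M}(I(H)^{[k]})$ is disconnected.
   Context: A perfect matching covers every vertex. $I(H)^{[k]}$ is the ideal of $S$ generated by the products $e_1\cdots e_k$ over all matchings $\{e_1,\dots,e_k\}$ of $H$ of size $k$ (edge $\{x_i,x_j\}$ identified with $x_ix_j$). For a monomial ideal $I$ and a monomial $x^\alpha$, the upper-Koszul simplicial complex $K^\alpha(I)$ on $\{x_1,\dots,x_n\}$ has as faces the subsets $W$ with $x^\alpha/\prod_{u\in W}u\in I$. A simplicial complex is connected if any two vertices are joined by a sequence of facets with consecutive facets intersecting. Two edges form a gap if they are disjoint and no edge of $H$ joins a vertex of one to a vertex of the other. A sequence $(a_1,\dots,a_n)$ of integers is $k$-admissable if $a_i\ge1$ and $\sum a_i\le n+k-1$. A matching $M$ is $k$-admissable if there are nonempty pairwise disjoint $M_1,\dots,M_r\subseteq M$ with union $M$ such that edges from different $M_i$'s always form a gap in $H$, $(|M_1|,\dots,|M_r|)$ is $k$-admissable, and the induced subgraph of $H$ on $\bigcup_{e\in M_i}e$ is a forest for each $i$. *)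

(* Defs.v *)
From HB Require Import structures.
From mathcomp Require Import all_boot all_order all_algebra.
From mathcomp Require Import mpoly.
Set Implicit Arguments. Unset Strict Implicit. Unset Printing Implicit Defensive.
Import GRing.Theory.
Local Open Scope ring_scope.

Definition simple_graph (n : nat) (adj : rel 'I_n) : Prop :=
  ssrbool.symmetric adj /\ ssrbool.irreflexive adj.

Definition is_edge (n : nat) (adj : rel 'I_n) (f : {set 'I_n}) : bool :=
  [exists i, exists j, adj i j && (f == [set i; j])].

Definition matching (n : nat) (adj : rel 'I_n) (M : {set {set 'I_n}}) : Prop :=
  (forall f, f \in M -> is_edge adj f) /\
  (forall f g, f \in M -> g \in M -> f != g -> [disjoint f & g]).

Definition perfect_matching (n : nat) (adj : rel 'I_n) (M : {set {set 'I_n}}) : Prop :=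
  matching adj M /\ cover M = [set: 'I_n].

Definition gap (n : nat) (adj : rel 'I_n) (f g : {set 'I_n}) : Prop :=
  [disjoint f & g] /\ (forall i j, i \in f -> j \in g -> ~~ adj i j).

Definition induced_forest (n : nat) (adj : rel 'I_n) (U : {set 'I_n}) : Prop :=
  forall c : seq 'I_n, uniq c -> (2 < size c)%N -> all (fun v => v \in U) c ->
    ~~ cycle adj c.

(* (a_1,...,a_r) is k-admissable iff a_i >= 1 and sum a_i <= r + k - 1 (stated as sum + 1 <= r + k to avoid truncated subtraction). *)
Definition admissable_seq (k : nat) (a : seq nat) : Prop :=
  all (fun x => (0 < x)%N) a /\ (sumn a + 1 <= size a + k)%N.

Definition admissable_matching (n : nat) (adj : rel 'I_n) (k : nat)
    (M : {set {set 'I_n}}) : Prop :=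
  exists P : {set {set {set 'I_n}}},
    partition P M /\
    (forall B1 B2, B1 \in P -> B2 \in P -> B1 != B2 ->
       forall f g, f \in B1 -> g \in B2 -> gap adj f g) /\
    admissable_seq k (map (fun B : {set {set 'I_n}} => #|B|) (enum P)) /\
    (forall B, B \in P -> induced_forest adj (cover B)).

Definition edge_monomial (K : fieldType) (n : nat) (M : {set {set 'I_n}})
    : {mpoly K[n]} :=
  \prod_(f in M) \prod_(i in f) 'X_i.
Arguments edge_monomial K {n} M.

Definition matching_gen (K : fieldType) (n : nat) (adj : rel 'I_n) (k : nat)
    (g : {mpoly K[n]}) : Prop :=
  exists M, matching adj M /\ #|M| = k /\ g = edge_monomial K M.
Arguments matching_gen K {n} adj k g.

Definition ideal_gen (K : fieldType) (n : nat) (G : {mpoly K[n]} -> Prop)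
    (p : {mpoly K[n]}) : Prop :=
  exists s : seq ({mpoly K[n]} * {mpoly K[n]}),
    (forall q, q \in s -> G q.2) /\ p = \sum_(q <- s) q.1 * q.2.

Definition squarefree_power_ideal (K : fieldType) (n : nat) (adj : rel 'I_n)
    (k : nat) : {mpoly K[n]} -> Prop :=
  ideal_gen (matching_gen K adj k).
Arguments squarefree_power_ideal K {n} adj k.

(* Upper-Koszul simplicial complex K^u(I): faces W with u / prod_{x in W} x in I
   (the quotient being a polynomial q with q * prod_{x in W} x = u). *)
Definition upper_koszul (K : fieldType) (n : nat) (I : {mpoly K[n]} -> Prop)
    (u : {mpoly K[n]}) (W : {set 'I_n}) : Prop :=
  exists q : {mpoly K[n]}, q * \prod_(i in W) 'X_i = u /\ I q.

Definition facet (n : nat) (D : {set 'I_n} -> Prop) (F : {set 'I_n}) : Prop :=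
  D F /\ (forall G, D G -> F \subset G -> G = F).

Definition sc_connected (n : nat) (D : {set 'I_n} -> Prop) : Prop :=
  forall v w : 'I_n, D [set v] -> D [set w] ->
    exists Fs : seq {set 'I_n},
      (forall F, F \in Fs -> facet D F) /\
      v \in head set0 Fs /\ w \in last set0 Fs /\
      (forall i, (i.+1 < size Fs)%N ->
         nth set0 Fs i :&: nth set0 Fs i.+1 != set0).

(* Main.v *)
Require Import Defs.
From HB Require Import structures.
From mathcomp Require Import all_boot all_order all_algebra.
From mathcomp Require Import mpoly.
From mathcomp Require Import zify ring.
Set Implicit Arguments. Unset Strict Implicit. Unset Printing Implicit Defensive.
Import GRing.Theory.
Local Open Scope ring_scope.

Lemma matching_triv n (adj : rel 'I_n) (M : {set {set 'I_n}}) : matching adj M -> trivIset M.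
Proof. by case=> _ HD; apply/trivIsetP => A B HA HB; apply: HD. Qed.

Lemma edge_card2 n (adj : rel 'I_n) (f : {set 'I_n}) : simple_graph adj -> is_edge adj f -> #|f| = 2%N.
Proof.
case=> _ Hirr /existsP[i /existsP[j /andP[Hij /eqP ->]]].
have nij : i != j by apply: contraTneq Hij => ->; rewrite Hirr.
by rewrite cards2 nij.
Qed.

Lemma cover_card n (adj : rel 'I_n) (X : {set {set 'I_n}}) : simple_graph adj ->
  (forall f, f \in X -> is_edge adj f) -> trivIset X -> #|cover X| = (2 * #|X|)%N.
Proof.
move=> Hs He /eqP <-.
rewrite (eq_bigr (fun _ => 2%N)); first by rewrite sum_nat_const mulnC.
by move=> f /He /(edge_card2 Hs).
Qed.

Definition mset n (A : {set 'I_n}) : 'X_{1..n} := (\big[+%MM/0%MM]_(i in A) U_(i))%MM.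

Lemma msetE n (A : {set 'I_n}) j : mset A j = (j \in A).
Proof.
rewrite /mset mnm_sumE; case: (boolP (j \in A)) => h.
- rewrite (bigD1 j) //= mnm1E eqxx big1 // => i /andP[_ nij].
  by rewrite mnm1E (negbTE nij).
- rewrite big1 // => i iA; rewrite mnm1E; case: eqP => // eij.
  by move: h; rewrite -eij iA.
Qed.

Lemma prodX (K : fieldType) n (A : {set 'I_n}) :
  \prod_(i in A) ('X_i : {mpoly K[n]}) = 'X_[mset A].
Proof.
rewrite /mset; elim/big_rec2: _ => [|i p m _ ->]; first by rewrite mpolyX0.
by rewrite mpolyXD.
Qed.

Lemma edge_monomial_cover (K : fieldType) n (X : {set {set 'I_n}}) :
  trivIset X -> edge_monomial K X = 'X_[mset (cover X)].
Proof. by move=> tX; rewrite -prodX /edge_monomial (big_trivIset _ tX). Qed.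

Lemma face_disjoint (K : fieldType) n (adj : rel 'I_n) k (C W : {set 'I_n}) q :
  q * \prod_(i in W) ('X_i : {mpoly K[n]}) = 'X_[mset C] ->
  squarefree_power_ideal K adj k q ->
  exists N, matching adj N /\ #|N| = k /\
    forall j, ((j \in cover N) + (j \in W) <= (j \in C))%N.
Proof.
move=> Hq [s [Hs Hqs]].
have nz : ('X_[mset C] : {mpoly K[n]})@_(mset C) != 0 by rewrite mcoeffX eqxx oner_neq0.
rewrite -Hq Hqs big_distrl /= raddf_sum /= in nz.
have [x xs nzx] : exists2 x, x \in s & (x.1 * x.2 * \prod_(i in W) 'X_i)@_(mset C) != 0.
  apply/hasP; apply: contraR nz => /hasPn H.
  apply/eqP; rewrite big_seq big1 // => x xs; apply/eqP.
  by move: (H x xs); rewrite negbK.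
have [N [HN [HNk HE]]] := Hs x xs.
exists N; split => //; split => //.
rewrite HE edge_monomial_cover ?(matching_triv HN) // prodX -mulrA -mpolyXD in nzx.
rewrite -mcoeff_msupp (perm_mem (msuppMX _ _)) in nzx.
case/mapP: nzx => m' _ Heq j.
move: (congr1 (fun m : 'X_{1..n} => m j) Heq) => /=.
rewrite !mnmDE !msetE => ->; exact: leq_addr.
Qed.

Theorem lemma5p9 (K : fieldType) (n : nat) (adj : rel 'I_n) (k : nat)
    (M : {set {set 'I_n}}) :
  simple_graph adj ->
  perfect_matching adj M ->
  #|M| = k.+1 ->
  admissable_matching adj k M ->
  ~ sc_connected (upper_koszul (squarefree_power_ideal K adj k)
                                (edge_monomial K M)).
Proof.
move=> Hsg [[HMe HMd] HcovM] HcardM [P [Hpart [Hgap [[Hpos Hsum] Hforest]]]] Hconn.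
have Hsg' := Hsg; case: Hsg' => Hsym Hirr.
have trivM : trivIset M by apply: (@matching_triv _ adj); split.
have Hn : n = (2 * k.+1)%N.
  by rewrite -HcardM -(cover_card Hsg HMe trivM) HcovM cardsT card_ord.
have Hpart' := Hpart; case/and3P: Hpart' => /eqP HcovP trivP set0P.
have PM : forall B, B \in P -> B \subset M.
  by move=> B BP; rewrite -HcovP; apply: bigcup_sup.
have HP2 : (2 <= #|P|)%N.
  move: Hsum; rewrite size_map sumnE big_map big_enum /=.
  rewrite -(card_partition Hpart) HcardM addn1 -add2n leq_add2r => H.
  rewrite cardE; exact: H.
have [B1 B1P] : exists B1, B1 \in P by apply/card_gt0P; apply: leq_trans HP2.
have [B2 B2P] : exists B2, B2 \in P :\ B1.
  by apply/card_gt0P; move: HP2; rewrite (cardsD1 B1 P) B1P.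
rewrite in_setD1 in B2P; case/andP: B2P => nB21 B2P.
have ne : forall B, B \in P -> exists f, f \in B.
  by move=> B BP; apply/set0Pn; apply: contraNneq set0P => eB; rewrite -eB.
have [f1 f1B1] := ne B1 B1P.
have [f2 f2B2] := ne B2 B2P.
have f1M : f1 \in M := subsetP (PM _ B1P) _ f1B1.
have f2M : f2 \in M := subsetP (PM _ B2P) _ f2B2.
have nv : forall f, f \in M -> exists v, v \in f.
  by move=> f fM; apply/card_gt0P; rewrite (edge_card2 Hsg (HMe f fM)).
have [v vf1] := nv f1 f1M.
have [w wf2] := nv f2 f2M.
have Hface1 : forall f v, f \in M -> v \in f ->
    upper_koszul (squarefree_power_ideal K adj k) (edge_monomial K M) [set v].
  move=> f v0 fM vf.
  exists ((\prod_(i in f :\ v0) 'X_i) * edge_monomial K (M :\ f)); split.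
    rewrite big_set1 /edge_monomial (big_setD1 _ fM) /= (big_setD1 _ vf) /=.
    by rewrite mulrC mulrA.
  exists [:: (\prod_(i in f :\ v0) ('X_i : {mpoly K[n]}), edge_monomial K (M :\ f))]; split.
    move=> x; rewrite inE => /eqP -> /=.
    exists (M :\ f); split; last split => //.
      split; first by move=> g; rewrite in_setD1 => /andP[_ /HMe].
      by move=> g h; rewrite !in_setD1 => /andP[_ gM] /andP[_ hM]; apply: HMd.
    by move: HcardM; rewrite (cardsD1 f M) fM add1n => -[].
  by rewrite big_cons big_nil addr0.
have HU : forall W x,
    upper_koszul (squarefree_power_ideal K adj k) (edge_monomial K M) W ->
    x \in W -> x \in cover B1 -> W \subset cover B1.
  move=> W x [q [Hq Iq]] xW xU.
  apply/subsetP => b bW; apply/negPn/negP => bU.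
  rewrite (edge_monomial_cover K trivM) in Hq.
  have [N [HN [HNk Hdj]]] := face_disjoint Hq Iq.
  set U := cover B1 in xU bU *.
  have trivN := matching_triv HN.
  case: HN => HNe HNd.
  have HcN : #|cover N| = (2 * k)%N by rewrite (cover_card Hsg HNe trivN) HNk.
  have B1M := PM _ B1P.
  have HcU : #|U| = (2 * #|B1|)%N.
    apply: (cover_card Hsg); first by move=> f fB; apply: HMe; apply: (subsetP B1M).
    exact: trivIsetS B1M trivM.
  have C : forall i y, adj i y -> i \in U -> y \in U.
    move=> i y Hiy iU; apply/negPn/negP => yU.
    case/bigcupP: iU => g gB1 ig.
    have : y \in cover M by rewrite HcovM inE.
    case/bigcupP => h hM yh.
    move: hM; rewrite -HcovP => /bigcupP [B2' B2'P hB2'].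
    have nB : B1 != B2'.
      by apply: contraNneq yU => eB; apply/bigcupP; exists h => //; rewrite eB.
    have [_ Hna] := Hgap _ _ B1P B2'P nB g h gB1 hB2'.
    by move: (Hna i y ig yh); rewrite Hiy.
  have Cl : forall e, e \in N -> forall j, j \in e -> j \in U -> e \subset U.
    move=> e eN j je jU; apply/subsetP => y ye.
    case/existsP: (HNe e eN) => i' /existsP [j' /andP [Hij /eqP Ee]].
    move: je ye jU; rewrite Ee !inE => /orP[]/eqP -> /orP[]/eqP -> jU //.
      exact: C Hij jU.
    by apply: C jU; rewrite Hsym.
  have HcN' : cover N :&: U = cover [set e in N | e \subset U].
    apply/setP => j; rewrite inE; apply/andP/bigcupP.
      case=> /bigcupP [e eN je] jU; exists e => //.
      by rewrite inE eN (Cl e eN j je jU).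
    case=> e; rewrite inE => /andP [eN eU] je; split.
      by apply/bigcupP; exists e.
    exact: (subsetP eU j je).
  have N'N : [set e in N | e \subset U] \subset N.
    by apply/subsetP => e; rewrite inE => /andP[].
  have HcN'2 : #|cover [set e in N | e \subset U]| = (2 * #|[set e in N | e \subset U]|)%N.
    apply: (cover_card Hsg); last exact: trivIsetS N'N trivN.
    by move=> f fN'; apply: HNe; exact: (subsetP N'N f fN').
  have Hd : forall j, j \in cover N -> j \in W -> False.
    by move=> j jN jW; move: (Hdj j); rewrite jN jW HcovM inE.
  have L1 : (#|cover N :&: U| < #|U|)%N.
    rewrite (cardsD1 x U) xU add1n ltnS; apply: subset_leq_card.
    apply/subsetP => j; rewrite !inE => /andP[jN jU]; rewrite jU andbT.
    by apply/eqP => ejx; apply: (Hd j jN); rewrite ejx.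
  have L2 : (#|cover N :\: U| < #|~: U|)%N.
    rewrite (cardsD1 b (~: U)) inE bU add1n ltnS; apply: subset_leq_card.
    apply/subsetP => j; rewrite !inE => /andP[jU jN]; rewrite jU andbT.
    by apply/eqP => ejb; apply: (Hd j jN); rewrite ejb.
  have E1 := cardsID U (cover N).
  have E2 := cardsC U.
  rewrite card_ord in E2.
  rewrite HcN' HcN'2 in L1 E1.
  move: L1 L2 E1 E2 HcN HcU Hn; clear; lia.
have [Fs [HF [Hv [Hw Hi]]]] := Hconn v w (Hface1 f1 v f1M vf1) (Hface1 f2 w f2M wf2).
have Fs0 : (0 < size Fs)%N by case: Fs Hv {HF Hw Hi} => //=; rewrite inE.
have Hall : forall i, (i < size Fs)%N -> nth set0 Fs i \subset cover B1.
  elim=> [|i IH] Hlt.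
    case: Fs HF Hv Hi Hlt {Hw Fs0} => // F Fs' HF Hv _ _ /=.
    apply: (HU F v) => //; first by case: (HF F (mem_head _ _)).
    by apply/bigcupP; exists f1.
  have := Hi i Hlt; case/set0Pn => x; rewrite inE => /andP[xi xi1].
  apply: (HU _ x) => //; first by case: (HF _ (mem_nth set0 Hlt)).
  exact: (subsetP (IH (ltnW Hlt))).
have Hlast : ((size Fs).-1 < size Fs)%N by rewrite prednK.
move: (subsetP (Hall _ Hlast) w); rewrite nth_last => /(_ Hw) /bigcupP [g gB1 wg].
have nB : B1 != B2 by rewrite eq_sym.
have [Hdis _] := Hgap _ _ B1P B2P nB g f2 gB1 f2B2.
by rewrite (disjointFr Hdis wg) in wf2.
Qed.
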